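(* If $M$ is a non-zero finitely generated $A\mathcal{V}$-module, then $\mathrm{GKdim}_{A\mathcal{V}}(M)\ge n$.
   Context: Setup: $\Bbbk$ is an algebraically closed field of characteristic $0$; $A=\Bbbk[x_1,\dots,x_n]$; $\mathcal{V}=\mathrm{Der}(A)=\bigoplus_i A\,\partial/\partial x_i$. An $A\mathcal{V}$-module is a vector space $M$ that is an $A$-module and a $\mathcal{V}$-module satisfying $\eta(fm)=\eta(f)m+f(\eta m)$ for $\eta\in\mathcal{V}$, $f\in A$, $m\in M$; equivalently a module over the smash product algebra $A\#U(\mathcal{V})$ (the algebra on $A\otimes U(\mathcal{V})$ with $(f\#\eta)(g\#\mu)=f\eta(g)\#\mu+fg\#\eta\mu$). This algebra is finitely generated. $\mathrm{GKdim}_{A\mathcal{V}}$ denotes Gelfand–Kirillov dimension as an $A\#U(\mathcal{V})$-module: for a finitely generated unital algebra $R$ with finite-dimensional generating subspace $C\ni 1$ and a module $M$ with finite-dimensional generating subspace $M_0$, $\mathrm{GKdim}_R(M)=\limsup_{m\to\infty}\log_m\dim(C^mM_0)$, independent of choices. *)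

(* Defs.v *)
From Stdlib Require Import Reals.
From Coquelicot Require Import Coquelicot.
From HB Require Import structures.
From mathcomp Require Import all_boot all_algebra.
From mathcomp Require Import mpoly.
From Stdlib Require Import ClassicalDescription.

Set Implicit Arguments.
Unset Strict Implicit.
Unset Printing Implicit Defensive.

Import GRing.Theory.
Local Open Scope ring_scope.

Section AV.
Variables (K : fieldType) (n : nat).

Definition Apoly := {mpoly K[n]}.

(* V = Der(A) = (+)_i A d/dx_i : a derivation eta = sum_i eta_i d/dx_i is
   represented by its coefficient family (eta_i)_i. *)
Definition Vder := 'I_n -> Apoly.

Definition der_act (eta : Vder) (f : Apoly) : Apoly :=
  \sum_(i < n) eta i * mderiv i f.

Definition Vadd (eta mu : Vder) : Vder := fun i => eta i + mu i.
Definition Vscale (c : K) (eta : Vder) : Vder := fun i => c *: eta i.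

(* Lie bracket of derivations: [eta, mu] = eta o mu - mu o eta,
   whose i-th coefficient is eta(mu_i) - mu(eta_i). *)
Definition Vlie (eta mu : Vder) : Vder :=
  fun i => der_act eta (mu i) - der_act mu (eta i).

(* An AV-module structure on the K-vector space M: a (K-bilinear) A-module
   structure aA, a V-module (= Lie algebra representation, i.e. U(V)-module)
   structure aV, and the Leibniz compatibility. *)
Record is_AVmodule (M : lmodType K) (aA : Apoly -> M -> M) (aV : Vder -> M -> M)
  : Prop := {
  aA_addl : forall f g m, aA (f + g) m = aA f m + aA g m;
  aA_scalel : forall c f m, aA (c *: f) m = c *: aA f m;
  aA_linr : forall f c m m', aA f (c *: m + m') = c *: aA f m + aA f m';
  aA_one : forall m, aA 1 m = m;
  aA_mul : forall f g m, aA (f * g) m = aA f (aA g m);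
  aV_addl : forall eta mu m, aV (Vadd eta mu) m = aV eta m + aV mu m;
  aV_scalel : forall c eta m, aV (Vscale c eta) m = c *: aV eta m;
  aV_linr : forall eta c m m', aV eta (c *: m + m') = c *: aV eta m + aV eta m';
  aV_lie : forall eta mu m,
      aV eta (aV mu m) - aV mu (aV eta m) = aV (Vlie eta mu) m;
  aV_leibniz : forall eta f m,
      aV eta (aA f m) = aA (der_act eta f) m + aA f (aV eta m)
}.

(* Elements are represented by formal expressions (terms) in the generators
   f in A, eta in V, scalars c in K, with sum and product; [req] is the
   smallest congruence making the quotient a unital associative K-algebra in
   which f |-> tA f is a K-algebra map from A, eta |-> tV eta is K-linear with
   tV eta tV mu - tV mu tV eta = tV [eta,mu] (so U(V) maps in), and
   tV eta tA f = tA (eta f) + tA f tV eta.  This is the standard presentation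
   of A # U(V) (f#eta = (f#1)(1#eta)). *)
Inductive sterm : Type :=
  | tA of Apoly
  | tV of Vder
  | tK of K
  | tadd of sterm & sterm
  | tmul of sterm & sterm.

Inductive req : sterm -> sterm -> Prop :=
  | req_refl t : req t t
  | req_sym s t : req s t -> req t s
  | req_trans s t u : req s t -> req t u -> req s u
  | req_add s s' t t' : req s s' -> req t t' -> req (tadd s t) (tadd s' t')
  | req_mul s s' t t' : req s s' -> req t t' -> req (tmul s t) (tmul s' t')
  | req_addA s t u : req (tadd s (tadd t u)) (tadd (tadd s t) u)
  | req_addC s t : req (tadd s t) (tadd t s)
  | req_add0 t : req (tadd (tK 0) t) t
  | req_addN t : req (tadd (tmul (tK (-1)) t) t) (tK 0)
  | req_mulA s t u : req (tmul s (tmul t u)) (tmul (tmul s t) u)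
  | req_mul1l t : req (tmul (tK 1) t) t
  | req_mul1r t : req (tmul t (tK 1)) t
  | req_mulDl s t u : req (tmul (tadd s t) u) (tadd (tmul s u) (tmul t u))
  | req_mulDr s t u : req (tmul u (tadd s t)) (tadd (tmul u s) (tmul u t))
  | req_Kadd a b : req (tK (a + b)) (tadd (tK a) (tK b))
  | req_Kmul a b : req (tK (a * b)) (tmul (tK a) (tK b))
  | req_Kcomm c t : req (tmul (tK c) t) (tmul t (tK c))
  | req_Aadd f g : req (tA (f + g)) (tadd (tA f) (tA g))
  | req_Ascale c f : req (tA (c *: f)) (tmul (tK c) (tA f))
  | req_Amul f g : req (tA (f * g)) (tmul (tA f) (tA g))
  | req_Aone : req (tA 1) (tK 1)
  | req_Vadd eta mu : req (tV (Vadd eta mu)) (tadd (tV eta) (tV mu))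
  | req_Vscale c eta : req (tV (Vscale c eta)) (tmul (tK c) (tV eta))
  | req_Vlie eta mu :
      req (tmul (tV eta) (tV mu)) (tadd (tmul (tV mu) (tV eta)) (tV (Vlie eta mu)))
  | req_VA eta f :
      req (tmul (tV eta) (tA f)) (tadd (tA (der_act eta f)) (tmul (tA f) (tV eta))).

Inductive in_span (cs : seq sterm) : sterm -> Prop :=
  | in_span0 : in_span cs (tK 0)
  | in_spanS a c t : List.In c cs -> in_span cs t ->
      in_span cs (tadd (tmul (tK a) c) t).

Inductive in_alg (cs : seq sterm) : sterm -> Prop :=
  | in_alg_gen c : List.In c cs -> in_alg cs c
  | in_alg_K a : in_alg cs (tK a)
  | in_alg_add s t : in_alg cs s -> in_alg cs t -> in_alg cs (tadd s t)
  | in_alg_mul s t : in_alg cs s -> in_alg cs t -> in_alg cs (tmul s t).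

Definition gen_subspace (cs : seq sterm) : Prop :=
  (exists t, in_span cs t /\ req t (tK 1)) /\
  (forall f, exists t, in_alg cs t /\ req t (tA f)) /\
  (forall eta, exists t, in_alg cs t /\ req t (tV eta)).

Section Module.
Variables (M : lmodType K) (aA : Apoly -> M -> M) (aV : Vder -> M -> M).

Fixpoint tact (t : sterm) (m : M) : M :=
  match t with
  | tA f => aA f m
  | tV eta => aV eta m
  | tK c => c *: m
  | tadd s u => tact s m + tact u m
  | tmul s u => tact s (tact u m)
  end.

Definition gen_module (ms : seq M) : Prop :=
  forall v : M, exists ps : seq (sterm * M),
    all (fun p => p.2 \in ms) ps /\ v = \sum_(p <- ps) tact p.1 p.2.

Definition words (cs : seq sterm) (m : nat) : seq (seq sterm) :=
  iter m (fun W => [seq c :: w | c <- cs, w <- W]) [:: [::]].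

Definition word_act (w : seq sterm) (v : M) : M := foldr tact v w.

(* a spanning family of C^m M_0 *)
Definition layer (cs : seq sterm) (ms : seq M) (m : nat) : seq M :=
  [seq word_act w v | w <- words cs m, v <- ms].

Definition lin_indep (s : seq M) : Prop :=
  forall c : seq K, size c = size s ->
    \sum_(i < size s) c`_i *: s`_i = 0 -> forall i, (i < size s)%N -> c`_i = 0.

Definition pb (P : Prop) : bool :=
  if excluded_middle_informative P then true else false.

Definition dim_span (s : seq M) : nat :=
  \max_(k < (size s).+1 |
        pb (exists s', subseq s' s /\ size s' = val k /\ lin_indep s')) val k.

Definition GKdim (cs : seq sterm) (ms : seq M) : Rbar :=
  LimSup_seq (fun m => Rdiv (ln (INR (dim_span (layer cs ms m)))) (ln (INR m))).

End Module.
End AV.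

(* Main.v *)
Require Import Defs.
From Stdlib Require Import Reals.
From Coquelicot Require Import Coquelicot.
From HB Require Import structures.
From mathcomp Require Import all_boot all_algebra.
From mathcomp Require Import mpoly.
From mathcomp Require Import ssrcomplements.
From mathcomp Require Import zify.
From Stdlib Require Import Lra Lia.
From Stdlib Require Import FunctionalExtensionality Classical ClassicalEpsilon.

Module Helpers.
Set Implicit Arguments. Unset Strict Implicit. Unset Printing Implicit Defensive.
Import GRing.Theory.
Local Open Scope ring_scope.

Section LA.
Variables (K : fieldType) (M : lmodType K).
Implicit Types (s : seq M) (y : M).

Definition inspan s y : Prop := exists c : nat -> K, y = \sum_(i < size s) c i *: s`_i.

Lemma inspan0 s : inspan s 0.
Proof. by exists (fun _ => 0); rewrite big1 // => i _; rewrite scale0r. Qed.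

Lemma inspanD s y z : inspan s y -> inspan s z -> inspan s (y + z).
Proof.
move=> [c ->] [d ->]; exists (fun i => c i + d i).
by rewrite -big_split; apply: eq_bigr => i _; rewrite scalerDl.
Qed.

Lemma inspanZ s a y : inspan s y -> inspan s (a *: y).
Proof.
move=> [c ->]; exists (fun i => a * c i).
by rewrite scaler_sumr; apply: eq_bigr => i _; rewrite scalerA.
Qed.

Lemma inspan_sum s (I : Type) (r : seq I) (F : I -> M) :
  (forall i, inspan s (F i)) -> inspan s (\sum_(i <- r) F i).
Proof.
move=> H; elim: r => [|a r IH]; first by rewrite big_nil; apply: inspan0.
by rewrite big_cons; apply: inspanD.
Qed.

Lemma inspan_nth s i : (i < size s)%N -> inspan s s`_i.
Proof.
move=> lt; exists (fun j => (j == i)%:R).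
rewrite (bigD1 (Ordinal lt)) //= eqxx scale1r big1 ?addr0 //.
move=> j /eqP nj; have ne : (nat_of_ord j != i).
  by apply/eqP => e; apply: nj; apply: val_inj.
by rewrite (negbTE ne) scale0r.
Qed.

Lemma inspan_mem s y : y \in s -> inspan s y.
Proof. by move=> ys; rewrite -(nth_index 0 ys); apply: inspan_nth; rewrite index_mem. Qed.

Lemma inspan_trans s1 s2 y :
  (forall x, x \in s1 -> inspan s2 x) -> inspan s1 y -> inspan s2 y.
Proof.
move=> H [c ->]; apply: inspan_sum => i; apply: inspanZ; apply: H.
by apply: mem_nth.
Qed.

Lemma lin_indep_cons s x : lin_indep s -> ~ inspan s x -> lin_indep (x :: s).
Proof.
move=> Hs Hx c sc Hsum0.
have Hsum : c`_0 *: x + \sum_(i < size s) c`_i.+1 *: s`_i = 0.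
  rewrite -[X in _ = X]Hsum0 /= big_ord_recl /=; congr (_ + _); apply: eq_bigr => i _.
have Hc0 : c`_0 = 0.
  apply/eqP; apply/negPn/negP => nz; apply: Hx.
  have -> : x = - (c`_0)^-1 *: \sum_(i < size s) c`_i.+1 *: s`_i.
    apply: (@scalerI _ _ c`_0) => //.
    rewrite scalerA mulrN mulfV // scaleN1r.
    by apply/eqP; rewrite -addr_eq0 Hsum.
  by apply: inspanZ; exists (fun i => c`_(i.+1)).
move: Hsum; rewrite Hc0 scale0r add0r => Hsum.
case: c sc Hc0 Hsum Hsum0 => [|c0 c] //= [sc] -> Hsum _ [|i] //= lt.
by apply: (Hs c sc) => //.
Qed.

Lemma greedy (L : seq M) :
  exists B, [/\ subseq B L, lin_indep B & forall y, y \in L -> inspan B y].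
Proof.
elim: L => [|x L [B [sB iB spB]]].
  exists [::]; split => //; move=> c _ _ i; by [].
case: (classic (inspan B x)) => hx.
  exists B; split => //; first by apply: (subseq_trans sB); apply: subseq_cons.
  by move=> y; rewrite in_cons => /orP [/eqP -> //|]; apply: spB.
exists (x :: B); split; first by rewrite /= eqxx.
  by apply: lin_indep_cons.
have Hsub : forall y, y \in B -> inspan (x :: B) y.
  by move=> y yB; apply: inspan_mem; rewrite in_cons yB orbT.
move=> y; rewrite in_cons => /orP [/eqP ->|yL].
  by apply: inspan_mem; rewrite mem_head.
by apply: (inspan_trans Hsub); apply: spB.
Qed.

Lemma ker_nz (t d : nat) (C : 'M[K]_(t, d)) :
  (d < t)%N -> exists u : 'rV[K]_t, u != 0 /\ u *m C = 0.
Proof.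
move=> lt.
have : ~~ row_free C.
  rewrite /row_free; apply/negP => /eqP e.
  by move: (rank_leq_col C); rewrite e leqNgt lt.
rewrite -kermx_eq0 => nz.
have [i ri] : exists i, row i (kermx C) != 0.
  case: (classic (exists i, row i (kermx C) != 0)) => // H.
  exfalso; move/negP: nz; apply.
  apply/eqP/row_matrixP => i; rewrite row0; apply/eqP.
  by apply/negPn/negP => ne; apply: H; exists i.
exists (row i (kermx C)); split => //.
by rewrite -row_mul mulmx_ker row0.
Qed.

Lemma steinitz (V W : seq M) :
  lin_indep V -> (forall y, y \in V -> inspan W y) -> (size V <= size W)%N.
Proof.
move=> iV spV; rewrite leqNgt; apply/negP => lt.
have H : forall i : 'I_(size V), exists c : nat -> K,
    V`_i = \sum_(j < size W) c j *: W`_j.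
  by move=> i; apply: spV; apply: mem_nth.
pose f (i : 'I_(size V)) := proj1_sig (constructive_indefinite_description _ (H i)).
have Hf : forall i : 'I_(size V), V`_i = \sum_(j < size W) f i j *: W`_j.
  by move=> i; rewrite /f; case: constructive_indefinite_description.
pose C : 'M[K]_(size V, size W) := \matrix_(i, j) f i j.
have [u [nzu uC]] := ker_nz C lt.
pose c := [seq u 0 i | i <- enum 'I_(size V)].
have cE : forall i : 'I_(size V), c`_i = u 0 i.
  by move=> i; rewrite (nth_map i) ?size_enum_ord // nth_ord_enum.
have Hsum : \sum_(i < size V) c`_i *: V`_i = 0.
  transitivity (\sum_(i < size V) u 0 i *: V`_i).
    by apply: eq_bigr => i _; rewrite cE.
  under eq_bigr => i _ do rewrite Hf scaler_sumr.
  rewrite exchange_big /= big1 // => j _.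
  rewrite (eq_bigr (fun i => (u 0 i * f i j) *: W`_j)); last by move=> i _; rewrite scalerA.
  rewrite -scaler_suml.
  have -> : \sum_(i < size V) u 0 i * f i j = (u *m C) 0 j.
    by rewrite !mxE; apply: eq_bigr => i _; rewrite mxE.
  by rewrite uC mxE scale0r.
have sc : size c = size V by rewrite size_map size_enum_ord.
have Hz := iV c sc Hsum. move/negP: nzu; apply; apply/eqP/rowP => i.
rewrite mxE; move: (Hz i (ltn_ord i)); by rewrite cE.
Qed.

Lemma pbT (P : Prop) : P -> pb P.
Proof. move=> HP; rewrite /pb; by case: (ClassicalDescription.excluded_middle_informative P). Qed.

Lemma dim_span_ge (L V : seq M) :
  lin_indep V -> (forall y, y \in V -> inspan L y) -> (size V <= Defs.dim_span L)%N.
Proof.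
move=> iV spV; have [B [sB iB spB]] := greedy L.
apply: (@leq_trans (size B)).
  apply: steinitz => // y yV; apply: (inspan_trans spB); exact: spV.
have lt : (size B < (size L).+1)%N by rewrite ltnS size_subseq.
rewrite /Defs.dim_span.
apply: (@leq_bigmax_cond _ _ (fun k : 'I_(size L).+1 => val k) (Ordinal lt)) => /=.
by apply: pbT; exists B.
Qed.

End LA.

Section Mod.
Variables (K : fieldType) (n : nat) (M : lmodType K).
Variables (aA : Apoly K n -> M -> M) (aV : Vder K n -> M -> M).
Hypothesis HAV : is_AVmodule aA aV.

Lemma aA_D f x y : aA f (x + y) = aA f x + aA f y.
Proof. by rewrite -{1}[x]scale1r (aA_linr HAV) scale1r. Qed.
Lemma aA_0 f : aA f 0 = 0.
Proof. by apply: (addrI (aA f 0)); rewrite -aA_D !addr0. Qed.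
Lemma aA_Z f c x : aA f (c *: x) = c *: aA f x.
Proof. by rewrite -[c *: x]addr0 (aA_linr HAV) aA_0 addr0. Qed.
Lemma aV_D f x y : aV f (x + y) = aV f x + aV f y.
Proof. by rewrite -{1}[x]scale1r (aV_linr HAV) scale1r. Qed.
Lemma aV_0 f : aV f 0 = 0.
Proof. by apply: (addrI (aV f 0)); rewrite -aV_D !addr0. Qed.
Lemma aV_Z f c x : aV f (c *: x) = c *: aV f x.
Proof. by rewrite -[c *: x]addr0 (aV_linr HAV) aV_0 addr0. Qed.
Lemma aA_Zl c f x : aA (c *: f) x = c *: aA f x.
Proof. exact: (aA_scalel HAV). Qed.
Lemma aA_Dl f g x : aA (f + g) x = aA f x + aA g x.
Proof. exact: (aA_addl HAV). Qed.
Lemma aA_0l x : aA 0 x = 0.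
Proof. by rewrite -(scale0r (0 : Apoly K n)) aA_Zl scale0r. Qed.
Lemma aA_1 x : aA 1 x = x.
Proof. exact: (aA_one HAV). Qed.
Lemma aA_M f g x : aA (f * g) x = aA f (aA g x).
Proof. exact: (aA_mul HAV). Qed.
Lemma aA_comm f g x : aA f (aA g x) = aA g (aA f x).
Proof. by rewrite -!aA_M mulrC. Qed.
Lemma aA_sumr f (I : Type) (r : seq I) (F : I -> M) :
  aA f (\sum_(i <- r) F i) = \sum_(i <- r) aA f (F i).
Proof.
elim: r => [|a r IH]; first by rewrite !big_nil aA_0.
by rewrite !big_cons aA_D IH.
Qed.
Lemma aV_sumr f (I : Type) (r : seq I) (F : I -> M) :
  aV f (\sum_(i <- r) F i) = \sum_(i <- r) aV f (F i).
Proof.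
elim: r => [|a r IH]; first by rewrite !big_nil aV_0.
by rewrite !big_cons aV_D IH.
Qed.

Definition ev (i : 'I_n) : Vder K n := fun j => ((i == j)%:R : Apoly K n).
Definition D (i : 'I_n) (x : M) := aV (ev i) x.
Definition X (i : 'I_n) (x : M) := aA 'X_i x.

Lemma der_act_ev i f : der_act (ev i) f = mderiv i f.
Proof.
rewrite /der_act (bigD1 i) //= /ev eqxx mul1r big1 ?addr0 // => j nj.
by rewrite eq_sym (negbTE nj) mul0r.
Qed.

Lemma D_aA i f x : D i (aA f x) = aA (mderiv i f) x + aA f (D i x).
Proof. by rewrite /D (aV_leibniz HAV) der_act_ev. Qed.

Lemma aV_zero eta x : (forall k, eta k = 0) -> aV eta x = 0.
Proof.
move=> H; have -> : eta = Vscale 0 eta.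
  by apply: functional_extensionality => k; rewrite /Vscale H scaler0.
by rewrite (aV_scalel HAV) scale0r.
Qed.

Lemma D_comm i j x : D i (D j x) = D j (D i x).
Proof.
apply/eqP; rewrite -subr_eq0; apply/eqP; rewrite /D (aV_lie HAV).
apply: aV_zero => k; rewrite /Vlie !der_act_ev /ev.
by rewrite -!(mpolyC_nat) !mderivC subrr.
Qed.

Lemma D_X i j x : D i (X j x) = (j == i)%:R *: x + X j (D i x).
Proof.
rewrite /X D_aA; congr (_ + _).
rewrite mderivX mnm1E aA_Zl; case: eqP => [->|_]; last by rewrite !scale0r.
have -> : (U_(i) - U_(i))%MM = 0%MM by rewrite -{1}[U_(i)%MM]add0m addmK.
by rewrite mpolyX0 aA_1.
Qed.

Definition Dl (s : seq 'I_n) x := foldr D x s.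

Lemma D_D i x y : D i (x + y) = D i x + D i y. Proof. exact: aV_D. Qed.
Lemma D_Z i c x : D i (c *: x) = c *: D i x. Proof. exact: aV_Z. Qed.
Lemma D_0 i : D i 0 = 0. Proof. exact: aV_0. Qed.

Lemma Dl_D s x y : Dl s (x + y) = Dl s x + Dl s y.
Proof. by elim: s => //= i s ->; rewrite D_D. Qed.
Lemma Dl_Z s c x : Dl s (c *: x) = c *: Dl s x.
Proof. by elim: s => //= i s ->; rewrite D_Z. Qed.
Lemma Dl_0 s : Dl s 0 = 0.
Proof. by elim: s => //= i s ->; rewrite D_0. Qed.

Lemma Dl_perm (s1 s2 : seq 'I_n) x :
  perm_eq s1 s2 -> Dl s1 x = Dl s2 x.
Proof.
have h (s : seq 'I_n) (i : 'I_n) : i \in s -> Dl s x = Dl (i :: rem i s) x.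
  elim: s=> [|y s ih] //; rewrite in_cons /=.
  by case: eqVneq => [->|ne_xy {}/ih ->] //=; rewrite D_comm.
elim: s1 s2 => [|i s1 ih] s2.
  by rewrite perm_sym=> /perm_small_eq=> ->.
move=> peq; have i_in_s2: i \in s2 by rewrite -(perm_mem peq) mem_head.
rewrite (h _ _ i_in_s2) /= (ih (rem i s2)) //.
by rewrite -(perm_cons i) (permPl peq) perm_to_rem.
Qed.

Definition sq (b : 'X_{1..n}) := flatten [seq nseq (b i) i | i <- enum 'I_n].

Lemma count_sq (a : pred 'I_n) b : count a (sq b) = (\sum_(i : 'I_n) a i * b i)%N.
Proof.
rewrite /sq count_flatten sumnE !big_map.
by apply: eq_bigr => i _; rewrite count_nseq.
Qed.

Lemma count_sq1 i b : count_mem i (sq b) = b i.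
Proof.
rewrite count_sq (bigD1 i) //= eqxx mul1n big1 ?addn0 // => j nj.
by rewrite (negbTE nj).
Qed.

Lemma perm_sqU b i : perm_eq (i :: sq b) (sq (b + U_(i))).
Proof.
apply/permP => a; rewrite /= !count_sq.
rewrite [in RHS](eq_bigr (fun j => a j * b j + a j * (i == j))%N); last first.
  by move=> j _; rewrite mnmDE mnm1E mulnDr.
rewrite big_split /= addnC; congr (_ + _)%N.
rewrite (bigD1 i) //= eqxx muln1 big1 ?addn0 // => j nj.
by rewrite eq_sym (negbTE nj) muln0.
Qed.

Definition Dm b x := Dl (sq b) x.

Lemma Dm0 x : Dm 0 x = x.
Proof.
rewrite /Dm /sq (eq_map (_ : _ =1 fun=> [::])); first by elim: (enum _).
by move=> i /=; rewrite mnm0E.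
Qed.

Lemma Dm_U b i x : D i (Dm b x) = Dm (b + U_(i)) x.
Proof. by rewrite /Dm -(Dl_perm x (perm_sqU b i)). Qed.

Lemma Dm_D b i x : Dm b (D i x) = D i (Dm b x).
Proof.
rewrite /Dm; have -> : Dl (sq b) (D i x) = Dl (rcons (sq b) i) x.
  by rewrite /Dl -cats1 foldr_cat.
have p : perm_eq (rcons (sq b) i) (i :: sq b) by rewrite perm_rcons.
by rewrite (Dl_perm x p).
Qed.

Lemma Dm_sub (b : 'X_{1..n}) i x : (0 < b i)%N -> Dm b x = Dm (b - U_(i)) (D i x).
Proof.
move=> lt; rewrite Dm_D Dm_U submK //.
by rewrite lep1mP -lt0n.
Qed.

Lemma Dm_D2 b x y : Dm b (x + y) = Dm b x + Dm b y. Proof. exact: Dl_D. Qed.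
Lemma Dm_Z b c x : Dm b (c *: x) = c *: Dm b x. Proof. exact: Dl_Z. Qed.
Lemma Dm_0 b : Dm b 0 = 0. Proof. exact: Dl_0. Qed.

Lemma Dl_X s i x :
  Dl s (X i x) = X i (Dl s x) + (count_mem i s)%:R *: Dl (rem i s) x.
Proof.
elim: s => [|j s IH] /=; first by rewrite scale0r addr0.
rewrite IH D_D D_X D_Z.
have [->|nij] := eqVneq j i.
  have E : (count_mem i s)%:R *: D i (Dl (rem i s) x) = (count_mem i s)%:R *: Dl s x.
    have [ins|nins] := boolP (i \in s).
      by rewrite (Dl_perm x (perm_to_rem ins)).
    by rewrite (count_memPn nins) !scale0r.
  rewrite /= E natrD scalerDl !scale1r.
  by rewrite (addrC (Dl s x)) -!addrA.
by rewrite /= scale0r add0r add0n.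
Qed.

Lemma Dm_X (b : 'X_{1..n}) i x : Dm b (X i x) = X i (Dm b x) + (b i)%:R *: Dm (b - U_(i)) x.
Proof.
rewrite /Dm Dl_X count_sq1; congr (_ + _).
have [z|lt] := eqVneq (b i) 0%N; first by rewrite z !scale0r.
congr (_ *: _); apply: Dl_perm.
have ins : i \in sq b by rewrite -has_pred1 has_count count_sq1 lt0n.
rewrite -(perm_cons i) -(permPl (perm_to_rem ins)).
have := perm_sqU (b - U_(i)) i; rewrite submK; first by rewrite perm_sym.
by rewrite lep1mP.
Qed.


Definition xa (m : 'X_{1..n+n}) : 'X_{1..n} := [multinom m (lshift n i) | i < n].
Definition xb (m : 'X_{1..n+n}) : 'X_{1..n} := [multinom m (rshift n i) | i < n].

Lemma xaD m1 m2 : xa (m1 + m2) = (xa m1 + xa m2)%MM.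
Proof. by apply/mnmP => i; rewrite !mnmE. Qed.
Lemma xbD m1 m2 : xb (m1 + m2) = (xb m1 + xb m2)%MM.
Proof. by apply/mnmP => i; rewrite !mnmE. Qed.
Lemma xaB m1 m2 : xa (m1 - m2) = (xa m1 - xa m2)%MM.
Proof. by apply/mnmP => i; rewrite !mnmE. Qed.
Lemma xbB m1 m2 : xb (m1 - m2) = (xb m1 - xb m2)%MM.
Proof. by apply/mnmP => i; rewrite !mnmE. Qed.
Lemma xa_Ul i : xa U_(lshift n i) = U_(i)%MM.
Proof. by apply/mnmP => j; rewrite !mnmE eq_lshift. Qed.
Lemma xb_Ul i : xb U_(lshift n i) = 0%MM.
Proof. by apply/mnmP => j; rewrite !mnmE eq_lrshift. Qed.
Lemma xa_Ur i : xa U_(rshift n i) = 0%MM.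
Proof. by apply/mnmP => j; rewrite !mnmE eq_rlshift. Qed.
Lemma xb_Ur i : xb U_(rshift n i) = U_(i)%MM.
Proof. by apply/mnmP => j; rewrite !mnmE eq_rshift. Qed.
Lemma xaE m i : xa m i = m (lshift n i). Proof. by rewrite mnmE. Qed.
Lemma xbE m i : xb m i = m (rshift n i). Proof. by rewrite mnmE. Qed.

Definition mono (m : 'X_{1..n+n}) x := aA 'X_[xa m] (Dm (xb m) x).

Lemma mono_D m x y : mono m (x + y) = mono m x + mono m y.
Proof. by rewrite /mono Dm_D2 aA_D. Qed.
Lemma mono_Z m c x : mono m (c *: x) = c *: mono m x.
Proof. by rewrite /mono Dm_Z aA_Z. Qed.
Lemma mono_0 m : mono m 0 = 0.
Proof. by rewrite /mono Dm_0 aA_0. Qed.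

Lemma mono_Ul m i x : mono (m + U_(lshift n i)) x = X i (mono m x).
Proof.
by rewrite /mono xaD xbD xa_Ul xb_Ul addm0 mpolyXD aA_M aA_comm.
Qed.

Lemma mono_Ur m i x : mono (m + U_(rshift n i)) x = mono m (D i x).
Proof.
by rewrite /mono xaD xbD xa_Ur xb_Ur addm0 -Dm_U Dm_D.
Qed.

Lemma D_mono m i x :
  D i (mono m x) = (xa m i)%:R *: mono (m - U_(lshift n i)) x + mono m (D i x).
Proof.
rewrite /mono D_aA mderivX aA_Zl xaB xbB xa_Ul xb_Ul subm0 Dm_D.
by [].
Qed.

Lemma mono_X m i x :
  mono m (X i x) = X i (mono m x) + (xb m i)%:R *: mono (m - U_(rshift n i)) x.
Proof.
rewrite /mono Dm_X aA_D aA_Z xaB xbB xa_Ur xb_Ur subm0; congr (_ + _).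
by rewrite /X aA_comm.
Qed.

Definition op (P : {mpoly K[n+n]}) x := \sum_(m <- msupp P) P@_m *: mono m x.

Lemma opwE (P : {mpoly K[n+n]}) k x : (msize P <= k)%N ->
  op P x = \sum_(m : 'X_{1..(n+n) < k}) P@_m *: mono m x.
Proof.
pose I : subFinType _ := 'X_{1..(n+n) < k}.
move=> le_pk; rewrite /op (big_mksub I) /=; first last.
  by move=> y /msize_mdeg_lt/leq_trans/(_ le_pk).
  by rewrite msupp_uniq.
rewrite big_rmcond //= => j /memN_msupp_eq0 ->.
by rewrite scale0r.
Qed.

Lemma op_D P Q x : op (P + Q) x = op P x + op Q x.
Proof.
pose k := maxn (msize P) (msize Q).
rewrite !(@opwE _ k) ?leq_maxl ?leq_maxr //; last first.
  by apply: leq_trans (msizeD_le _ _) _.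
rewrite -big_split /=; apply: eq_bigr => m _.
by rewrite mcoeffD scalerDl.
Qed.

Lemma op_Z c P x : op (c *: P) x = c *: op P x.
Proof.
rewrite !(@opwE _ (msize P)) //; last by apply: msizeZ_le.
rewrite scaler_sumr; apply: eq_bigr => m _.
by rewrite mcoeffZ scalerA.
Qed.

Lemma op_0 x : op 0 x = 0.
Proof. by rewrite /op msupp0 big_nil. Qed.

Lemma op_X m x : op 'X_[m] x = mono m x.
Proof. by rewrite /op msuppX big_seq1 mcoeffX eqxx scale1r. Qed.

Lemma op_lin (I : Type) (r : seq I) (c : I -> K) (f : I -> 'X_{1..n+n}) x :
  op (\sum_(i <- r) c i *: 'X_[f i]) x = \sum_(i <- r) c i *: mono (f i) x.
Proof.
elim: r => [|a r IH]; first by rewrite !big_nil op_0.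
by rewrite !big_cons op_D op_Z op_X IH.
Qed.

Lemma op_Dr P x y : op P (x + y) = op P x + op P y.
Proof. by rewrite /op -big_split; apply: eq_bigr => m _; rewrite mono_D scalerDr. Qed.
Lemma op_Zr P c x : op P (c *: x) = c *: op P x.
Proof.
by rewrite /op scaler_sumr; apply: eq_bigr => m _; rewrite mono_Z !scalerA mulrC.
Qed.
Lemma op_0r P : op P 0 = 0.
Proof. by rewrite /op big1 // => m _; rewrite mono_0 scaler0. Qed.

Lemma X_sumr i (I : Type) (r : seq I) (F : I -> M) :
  X i (\sum_(j <- r) F j) = \sum_(j <- r) X i (F j).
Proof. exact: aA_sumr. Qed.
Lemma D_sumr i (I : Type) (r : seq I) (F : I -> M) :
  D i (\sum_(j <- r) F j) = \sum_(j <- r) D i (F j).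
Proof. exact: aV_sumr. Qed.

Lemma op_Ul Q i x : X i (op Q x) = op ('X_[U_(lshift n i)] * Q) x.
Proof.
rewrite {2}[Q]mpolyE mulr_sumr.
rewrite (eq_bigr (fun m => Q@_m *: 'X_[m + U_(lshift n i)])); last first.
  by move=> m _; rewrite -scalerAr -mpolyXD addmC.
rewrite op_lin /op X_sumr; apply: eq_bigr => m _.
by rewrite mono_Ul /X aA_Z.
Qed.

Lemma op_Ur Q i x : op Q (D i x) = op (Q * 'X_[U_(rshift n i)]) x.
Proof.
rewrite {2}[Q]mpolyE mulr_suml.
rewrite (eq_bigr (fun m => Q@_m *: 'X_[m + U_(rshift n i)])); last first.
  by move=> m _; rewrite -scalerAl -mpolyXD.
rewrite op_lin /op; apply: eq_bigr => m _.
by rewrite mono_Ur.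
Qed.

Lemma mderiv_E (j : 'I_(n+n)) (Q : {mpoly K[n+n]}) :
  mderiv j Q = \sum_(m <- msupp Q) (Q@_m * (m j)%:R) *: 'X_[m - U_(j)].
Proof.
rewrite {1}[Q]mpolyE raddf_sum /=; apply: eq_bigr => m _.
by rewrite mderivZ mderivX scalerA.
Qed.

Lemma op_Dl Q i x : D i (op Q x) = op (mderiv (lshift n i) Q) x + op Q (D i x).
Proof.
rewrite mderiv_E op_lin /op D_sumr -big_split; apply: eq_bigr => m _ /=.
by rewrite D_Z D_mono scalerDr scalerA xaE.
Qed.

Lemma op_Xr Q i x : op Q (X i x) = X i (op Q x) + op (mderiv (rshift n i) Q) x.
Proof.
rewrite mderiv_E op_lin /op X_sumr -big_split; apply: eq_bigr => m _ /=.
by rewrite mono_X scalerDr scalerA xbE /X aA_Z.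
Qed.


Lemma msize_leP (P : {mpoly K[n+n]}) k :
  (forall m, m \in msupp P -> (mdeg m < k)%N) -> (msize P <= k)%N.
Proof.
move=> H; rewrite msizeE; apply/bigmax_leqP_seq => m mP _; exact: H.
Qed.

Lemma msize_UlM (Q : {mpoly K[n+n]}) i k :
  (msize Q <= k)%N -> (msize ('X_[U_(lshift n i)] * Q) <= k.+1)%N.
Proof.
move=> le; apply: msize_leP => m; rewrite mulrC (perm_mem (msuppMX _ _)).
move=> /mapP [m' m'Q ->]; rewrite mdegD mdeg1 add1n ltnS.
exact: leq_trans (msize_mdeg_lt m'Q) le.
Qed.

Lemma msize_MUr (Q : {mpoly K[n+n]}) i k :
  (msize Q <= k)%N -> (msize (Q * 'X_[U_(rshift n i)]) <= k.+1)%N.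
Proof.
move=> le; apply: msize_leP => m; rewrite (perm_mem (msuppMX _ _)).
move=> /mapP [m' m'Q ->]; rewrite mdegD mdeg1 add1n ltnS.
exact: leq_trans (msize_mdeg_lt m'Q) le.
Qed.

Lemma msize_deriv (Q : {mpoly K[n+n]}) j k :
  (msize Q <= k.+1)%N -> (msize (mderiv j Q) <= k)%N.
Proof.
move=> le; apply: msize_leP => m; rewrite mcoeff_msupp mcoeff_deriv => nz.
have : (m + U_(j))%MM \in msupp Q.
  rewrite mcoeff_msupp; apply/negP => /eqP e; move: nz; by rewrite e mul0rn eqxx.
move=> /msize_mdeg_lt; rewrite mdegD mdeg1 addn1 => lt.
by rewrite -ltnS; exact: leq_trans lt le.
Qed.

Lemma mono0 x : mono 0%MM x = x.
Proof.
rewrite /mono.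
have -> : xa 0%MM = 0%MM by apply/mnmP => i; rewrite !mnmE.
have -> : xb 0%MM = 0%MM by apply/mnmP => i; rewrite !mnmE.
by rewrite Dm0 mpolyX0 aA_1.
Qed.

Lemma op_C c x : op c%:MP x = c *: x.
Proof.
have -> : (c%:MP : {mpoly K[n+n]}) = c *: 'X_[0%MM] by rewrite mpolyX0 -mul_mpolyC mulr1.
by rewrite op_Z op_X mono0.
Qed.

Lemma op_sumr P (I : Type) (r : seq I) (F : I -> M) :
  op P (\sum_(i <- r) F i) = \sum_(i <- r) op P (F i).
Proof.
elim: r => [|a r IH]; first by rewrite !big_nil op_0r.
by rewrite !big_cons op_Dr IH.
Qed.

Hypothesis charK0 : [pchar K] =i pred0.

Lemma natr_nz m : (0 < m)%N -> (m%:R : K) != 0.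
Proof.
move=> lt; apply/negP => H; have [p Hp] := natf0_pchar lt H.
by rewrite charK0 in Hp.
Qed.

Lemma deriv0_const (P : {mpoly K[n+n]}) :
  (forall j, mderiv j P = 0) -> P = (P@_0%MM)%:MP.
Proof.
move=> H; apply/mpolyP => m; rewrite mcoeffC.
have [->|nz] := eqVneq m 0%MM; first by rewrite mulr1.
rewrite mulr0.
have [j lt] : exists j, (0 < m j)%N.
  case: (classic (exists j, (0 < m j)%N)) => // H'.
  exfalso; move/eqP: nz; apply; apply/mnmP => j; rewrite mnm0E.
  by apply/eqP; rewrite -leqn0 leqNgt; apply/negP => h; apply: H'; exists j.
have := congr1 (mcoeff (m - U_(j))) (H j).
rewrite mcoeff0 mcoeff_deriv submK ?lep1mP -?lt0n // => /eqP.
rewrite -mulr_natr mulf_eq0 => /orP [/eqP //|].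
by rewrite (negbTE (natr_nz _)).
Qed.

Variable v : M.
Hypothesis v_nz : v != 0.

Definition inF k u := exists Q : {mpoly K[n+n]}, (msize Q <= k.+1)%N /\ u = op Q v.

Lemma inF_v k : inF k v.
Proof. by exists 1; rewrite msize1 op_C scale1r. Qed.

Lemma inF_le k k' u : (k <= k')%N -> inF k u -> inF k' u.
Proof. by move=> le [Q [HQ ->]]; exists Q; split => //; apply: leq_trans HQ _. Qed.

Lemma inF_X k u i : inF k u -> inF k.+1 (X i u).
Proof.
move=> [Q [HQ ->]]; exists ('X_[U_(lshift n i)] * Q); split.
  exact: msize_UlM.
by rewrite op_Ul.
Qed.

Lemma inF_D k u i : inF k u -> inF k.+1 (D i u).
Proof.
move=> [Q [HQ ->]]; exists (mderiv (lshift n i) Q + Q * 'X_[U_(rshift n i)]); split.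
  apply: leq_trans (msizeD_le _ _) _; rewrite geq_max; apply/andP; split.
    exact: leq_trans (msize_deriv (lshift n i) HQ) (leqW (leqnSn k)).
  exact: msize_MUr.
by rewrite op_Dl op_Ur op_D.
Qed.

Lemma joseph k (P : {mpoly K[n+n]}) :
  (msize P <= k.+1)%N -> (forall u, inF k u -> op P u = 0) -> P = 0.
Proof.
elim: k P => [|k IH] P HP Hu.
  have E := msize1_polyC HP.
  move: (Hu v (inF_v 0)); rewrite E op_C => /eqP.
  by rewrite scaler_eq0 (negbTE v_nz) orbF => /eqP c0; rewrite c0 mpolyC0.
have Hd : forall j, mderiv j P = 0.
  move=> j; apply: IH; first exact: msize_deriv.
  move=> u Fu; have Fu' : inF k.+1 u by apply: inF_le Fu.
  case: (splitP j) => i ji.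
    have -> : j = lshift n i by apply: val_inj.
    have := op_Dl P i u; rewrite (Hu _ Fu') (Hu _ (inF_D i Fu)) D_0 addr0.
    by move=> ->.
  have -> : j = rshift n i by apply: val_inj.
  have := op_Xr P i u; rewrite (Hu _ Fu') (Hu _ (inF_X i Fu)) /X aA_0 add0r.
  by move=> ->.
have E := deriv0_const Hd.
move: (Hu v (inF_v _)); rewrite E op_C => /eqP.
by rewrite scaler_eq0 (negbTE v_nz) orbF => /eqP c0; rewrite c0 mpolyC0.
Qed.


Lemma mnm_pos (m : 'X_{1..n+n}) : m != 0%MM -> exists j, (0 < m j)%N.
Proof.
move=> nz; case: (classic (exists j, (0 < m j)%N)) => // H'.
exfalso; move/eqP: nz; apply; apply/mnmP => j; rewrite mnm0E.
by apply/eqP; rewrite -leqn0 leqNgt; apply/negP => h; apply: H'; exists j.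
Qed.

Lemma inF_mono d : forall (m : 'X_{1..n+n}) k u, mdeg m = d -> inF k u ->
  inF (k + d) (mono m u).
Proof.
elim: d => [|d IH] m k u dm Fu.
  move/eqP: dm; rewrite mdeg_eq0 => /eqP ->; by rewrite mono0 addn0.
have nz : m != 0%MM by apply/negP => /eqP e; move: dm; rewrite e mdeg0.
have [j lt] := mnm_pos nz.
have mE : m = (m - U_(j) + U_(j))%MM by rewrite submK // lep1mP -lt0n.
have dm' : mdeg (m - U_(j))%MM = d.
  by move: dm; rewrite {1}mE mdegD mdeg1 addn1 => [[]].
case: (splitP j) => i ji.
  have ej : j = lshift n i by apply: val_inj.
  rewrite mE ej mono_Ul -ej addnS; apply: inF_X; exact: IH.
have ej : j = rshift n i by apply: val_inj.
rewrite mE ej mono_Ur -ej -addSnnS; apply: IH => //; exact: inF_D.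
Qed.

Definition G k := map (fun m : 'X_{1..(n+n) < k.+1} => mono m v) (index_enum 'X_{1..(n+n) < k.+1}).

Lemma inF_G k u : inF k u -> inspan (G k) u.
Proof.
move=> [Q [HQ ->]]; rewrite (opwE _ HQ); apply: inspan_sum => m.
apply: inspanZ; apply: inspan_mem; apply: map_f; exact: mem_index_enum.
Qed.

Lemma G_inF k y : y \in G k -> inF k y.
Proof.
move=> /mapP [m _ ->]; exists 'X_[m]; split; last by rewrite op_X.
by rewrite msizeX; exact: bmdeg.
Qed.

Definition boxl b : seq 'X_{1..n+n} :=
  map (fun f : {ffun 'I_(n+n) -> 'I_b.+1} => [multinom (val (f j)) | j < n+n])
    (enum {ffun 'I_(n+n) -> 'I_b.+1}).

Lemma size_boxl b : size (boxl b) = (b.+1 ^ (n+n))%N.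
Proof. by rewrite size_map -cardE card_ffun !card_ord. Qed.

Lemma uniq_boxl b : uniq (boxl b).
Proof.
rewrite map_inj_uniq ?enum_uniq // => f1 f2 e; apply/ffunP => j; apply: val_inj.
by move/mnmP: e => /(_ j); rewrite !mnmE.
Qed.

Lemma mdeg_boxl b m : m \in boxl b -> (mdeg m <= (n+n) * b)%N.
Proof.
move=> /mapP [f _ ->]; rewrite mdegE.
apply: (@leq_trans (\sum_(i : 'I_(n+n)) b)).
  by apply: leq_sum => i _; rewrite mnmE -ltnS ltn_ord.
by rewrite sum_nat_const card_ord.
Qed.

Lemma count_main b (L : seq M) :
  (forall u, inF ((n+n)*b + (n+n)*b) u -> inspan L u) ->
  (b.+1 ^ n <= Defs.dim_span L)%N.
Proof.
set k := ((n+n)*b)%N => HL.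
have [B1 [sB1 iB1 spB1]] := greedy (G k).
have [B2 [sB2 iB2 spB2]] := greedy (G (k+k)).
have F1 : forall y, y \in B1 -> inF k y.
  by move=> y yB; apply: G_inF; exact: (mem_subseq sB1 yB).
have F2 : forall y, y \in B2 -> inF (k+k) y.
  by move=> y yB; apply: G_inF; exact: (mem_subseq sB2 yB).
have inB2 : forall u, inF (k+k) u -> inspan B2 u.
  by move=> u Fu; apply: (inspan_trans spB2); exact: inF_G.
have inB1 : forall u, inF k u -> inspan B1 u.
  by move=> u Fu; apply: (inspan_trans spB1); exact: inF_G.
have rs : (size B1 <= size B2)%N.
  apply: steinitz => // y yB; apply: inB2; apply: (inF_le (leq_addr k k)).
  exact: F1.
have sd : (size B2 <= Defs.dim_span L)%N.
  by apply: dim_span_ge => // y yB; apply: HL; exact: F2.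
have Nrs : (b.+1 ^ (n+n) <= size B1 * size B2)%N.
  rewrite leqNgt; apply/negP => lt.
  set r := size B1 in lt *; set s := size B2 in lt *; set bl := boxl b.
  have Hy : forall (t : 'I_(size bl)) (i : 'I_r), exists c : nat -> K,
      mono (nth 0%MM bl t) B1`_i = \sum_(j < s) c j *: B2`_j.
    move=> t i; apply: inB2.
    have mt : (mdeg (nth 0%MM bl t) <= k)%N by apply: mdeg_boxl; exact: mem_nth.
    apply: (inF_le (leq_add (leqnn k) mt)); apply: inF_mono => //.
    by apply: F1; exact: mem_nth.
  pose coef t i := proj1_sig (constructive_indefinite_description _ (Hy t i)).
  have Hc : forall (t : 'I_(size bl)) (i : 'I_r), mono (nth 0%MM bl t) B1`_i = \sum_(j < s) coef t i j *: B2`_j.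
    by move=> t i; rewrite /coef; case: constructive_indefinite_description.
  pose Big : 'M[K]_(size bl, r * s) :=
    \matrix_(t, c) mxvec (\matrix_(i, j) coef t i j) 0 c.
  have ltN : (r * s < size bl)%N by rewrite size_boxl.
  have [u [nzu uB]] := ker_nz Big ltN.
  pose P : {mpoly K[n+n]} := \sum_(t < size bl) u 0 t *: 'X_[(nth 0%MM bl t)].
  have Pcoef : forall t : 'I_(size bl), P@_((nth 0%MM bl t)) = u 0 t.
    move=> t; rewrite raddf_sum (bigD1 t) //= mcoeffZ mcoeffX eqxx mulr1.
    rewrite big1 ?addr0 // => t' nt; rewrite mcoeffZ mcoeffX.
    rewrite nth_uniq ?ltn_ord ?uniq_boxl //.
    by rewrite (inj_eq val_inj) (negbTE nt) mulr0.
  have Psize : (msize P <= k.+1)%N.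
    apply: leq_trans (msize_sum _ _ _) _; apply/bigmax_leqP_seq => t _ _.
    apply: leq_trans (msizeZ_le _ _) _; rewrite msizeX ltnS.
    by apply: mdeg_boxl; exact: mem_nth.
  have Pzero : forall i : 'I_r, op P B1`_i = 0.
    move=> i; rewrite op_lin.
    under eq_bigr => t _ do rewrite Hc scaler_sumr.
    rewrite exchange_big /= big1 // => j _.
    rewrite (eq_bigr (fun t => (u 0 t * coef t i j) *: B2`_j)); last first.
      by move=> t _; rewrite scalerA.
    rewrite -scaler_suml.
    have -> : \sum_(t < size bl) u 0 t * coef t i j = (u *m Big) 0 (mxvec_index i j).
      by rewrite !mxE; apply: eq_bigr => t _; rewrite mxE mxvecE mxE.
    by rewrite uB mxE scale0r.
  have P0 : P = 0.
    apply: (joseph Psize) => w /inB1 [c ->].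
    rewrite op_sumr big1 // => i _; by rewrite op_Zr Pzero scaler0.
  move/negP: nzu; apply; apply/eqP/rowP => t; rewrite mxE.
  by rewrite -Pcoef P0 mcoeff0.
rewrite leqNgt; apply/negP => lt.
have : (size B1 * size B2 < b.+1 ^ (n+n))%N.
  rewrite expnD; apply: (@leq_ltn_trans (size B2 * size B2)).
    by rewrite leq_mul2r rs orbT.
  apply: ltn_mul; exact: leq_ltn_trans sd lt.
by rewrite ltnNge Nrs.
Qed.

End Mod.

Section Gen.
Variables (K : fieldType) (n : nat) (M : lmodType K).
Variables (aA : Apoly K n -> M -> M) (aV : Vder K n -> M -> M).
Hypothesis HAV : is_AVmodule aA aV.
Variables (cs : seq (sterm K n)) (ms : seq M).
Hypothesis Hcs : gen_subspace cs.

Local Notation tact := (tact aA aV).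

Lemma tact_lin t c x y : tact t (c *: x + y) = c *: tact t x + tact t y.
Proof.
elim: t x y => [f|eta|a|s IHs u IHu|s IHs u IHu] x y /=.
- exact: (aA_linr HAV).
- exact: (aV_linr HAV).
- by rewrite scalerDr !scalerA mulrC.
- by rewrite IHs IHu scalerDr addrACA.
- by rewrite IHu IHs.
Qed.

Lemma tact_D t x y : tact t (x + y) = tact t x + tact t y.
Proof. by rewrite -{1}[x]scale1r tact_lin scale1r. Qed.
Lemma tact_0 t : tact t 0 = 0.
Proof. by apply: (addrI (tact t 0)); rewrite -tact_D !addr0. Qed.
Lemma tact_Z t c x : tact t (c *: x) = c *: tact t x.
Proof. by rewrite -[c *: x]addr0 tact_lin tact_0 addr0. Qed.
Lemma tact_sum t (I : Type) (r : seq I) (F : I -> M) :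
  tact t (\sum_(i <- r) F i) = \sum_(i <- r) tact t (F i).
Proof.
elim: r => [|a r IH]; first by rewrite !big_nil tact_0.
by rewrite !big_cons tact_D IH.
Qed.

Lemma req_tact s t : req s t -> forall x, tact s x = tact t x.
Proof.
elim=> {s t} /=.
- by [].
- by move=> s t _ IH x.
- by move=> s t u _ IH1 _ IH2 x; rewrite IH1 IH2.
- by move=> s s' t t' _ IH1 _ IH2 x; rewrite IH1 IH2.
- by move=> s s' t t' _ IH1 _ IH2 x; rewrite IH2 IH1.
- by move=> s t u x; rewrite addrA.
- by move=> s t x; rewrite addrC.
- by move=> t x; rewrite scale0r add0r.
- by move=> t x; rewrite scaleN1r addNr scale0r.
- by [].
- by move=> t x; rewrite scale1r.
- by move=> t x; rewrite scale1r.
- by [].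
- by move=> s t u x; rewrite tact_D.
- by move=> a b x; rewrite scalerDl.
- by move=> a b x; rewrite scalerA.
- by move=> c t x; rewrite tact_Z.
- by move=> f g x; rewrite (aA_addl HAV).
- by move=> c f x; rewrite (aA_scalel HAV).
- by move=> f g x; rewrite (aA_mul HAV).
- by move=> x; rewrite (aA_one HAV) scale1r.
- by move=> eta mu x; rewrite (aV_addl HAV).
- by move=> c eta x; rewrite (aV_scalel HAV).
- by move=> eta mu x; rewrite -(aV_lie HAV) addrC subrK.
- by move=> eta f x; rewrite (aV_leibniz HAV).
Qed.

Definition inS L y := inspan (layer aA aV cs ms L) y.

Lemma layer_mem (W : seq (seq (sterm K n))) x :
  x \in [seq word_act aA aV w u | w <- W, u <- ms] ->
  exists w u, [/\ List.In w W, u \in ms & x = word_act aA aV w u].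
Proof.
elim: W => [|w W IH] //=; rewrite mem_cat => /orP [/mapP [u um ->]|/IH].
  by exists w, u; split => //; left.
by move=> [w' [u [H1 H2 H3]]]; exists w', u; split => //; right.
Qed.

Lemma layer_in (W : seq (seq (sterm K n))) w u :
  List.In w W -> u \in ms -> word_act aA aV w u \in [seq word_act aA aV w u | w <- W, u <- ms].
Proof.
elim: W => [|w' W IH] //= [->|H] um; rewrite mem_cat.
  by rewrite map_f.
by rewrite IH ?orbT.
Qed.

Lemma In_map (A B : Type) (f : A -> B) x (s : seq A) :
  List.In x s -> List.In (f x) (map f s).
Proof. by elim: s => //= a s IH [->|H]; [left|right; apply: IH]. Qed.

Lemma In_cat (A : Type) x (s t : seq A) :
  List.In x s \/ List.In x t -> List.In x (s ++ t).
Proof.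
elim: s => [|a s IH] /= H; first by case: H.
case: H => [[->|H]|H]; first by left.
  by right; apply: IH; left.
by right; apply: IH; right.
Qed.

Lemma allpairs_In (cs0 : seq (sterm K n)) (W : seq (seq (sterm K n))) c w :
  List.In c cs0 -> List.In w W -> List.In (c :: w) [seq c :: w | c <- cs0, w <- W].
Proof.
elim: cs0 => [|c' cs' IH] //= Hc Hw; apply: In_cat.
case: Hc => [<-|H].
  by left; exact: (In_map (fun w0 => c' :: w0) Hw).
by right; apply: IH.
Qed.

Lemma words_S c w L : List.In c cs -> List.In w (words cs L) ->
  List.In (c :: w) (words cs L.+1).
Proof.
move=> Hc Hw; rewrite /words iterS -/(words cs L).
exact: allpairs_In.
Qed.

Lemma inS_gen c L y : List.In c cs -> inS L y -> inS L.+1 (tact c y).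
Proof.
move=> Hc [a ->]; rewrite tact_sum; apply: inspan_sum => i.
rewrite tact_Z; apply: inspanZ; apply: inspan_mem.
have /layer_mem [w [u [Hw Hu ->]]] : (layer aA aV cs ms L)`_i \in layer aA aV cs ms L.
  by apply: mem_nth.
have -> : tact c (word_act aA aV w u) = word_act aA aV (c :: w) u by [].
by apply: layer_in => //; apply: words_S.
Qed.

Lemma inS_span t L y : in_span cs t -> inS L y -> inS L.+1 (tact t y).
Proof.
move=> Ht Hy; elim: Ht => [|a c t' Hc _ IH] /=.
  by rewrite scale0r; apply: inspan0.
apply: inspanD => //; apply: inspanZ; exact: inS_gen.
Qed.

Lemma inS_S L y : inS L y -> inS L.+1 y.
Proof.
move=> Hy; have [[t1 [Ht1 Er]] _] := Hcs.
by have := inS_span Ht1 Hy; rewrite (req_tact Er) /= scale1r.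
Qed.

Lemma inS_le L L' y : (L <= L')%N -> inS L y -> inS L' y.
Proof.
move=> /subnK <-; elim: (L' - L)%N => [|j IH] // Hy; rewrite addSn.
by apply: inS_S; apply: IH.
Qed.

Definition good t l := forall L y, inS L y -> inS (L + l) (tact t y).

Lemma good_le t l l' : (l <= l')%N -> good t l -> good t l'.
Proof. by move=> le H L y Hy; apply: (inS_le (leq_add (leqnn L) le)); apply: H. Qed.

Lemma good_alg t : Defs.in_alg cs t -> exists l, good t l.
Proof.
elim=> {t} [c Hc|a|s u _ [l1 H1] _ [l2 H2]|s u _ [l1 H1] _ [l2 H2]].
- by exists 1%N => L y Hy; rewrite addn1; apply: inS_gen.
- by exists 0%N => L y Hy; rewrite addn0 /=; apply: inspanZ.
- exists (maxn l1 l2) => L y Hy /=; apply: inspanD.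
    exact: (good_le (leq_maxl _ _) H1).
  exact: (good_le (leq_maxr _ _) H2).
- exists (l2 + l1)%N => L y Hy /=; rewrite addnA; apply: H1; exact: H2.
Qed.

Lemma good_all t : exists l, good t l.
Proof.
have [_ [HA HV]] := Hcs.
elim: t => [f|eta|a|s [l1 H1] u [l2 H2]|s [l1 H1] u [l2 H2]].
- have [t' [Ht' E]] := HA f; have [l H] := good_alg Ht'.
  by exists l => L y Hy; rewrite -(req_tact E); apply: H.
- have [t' [Ht' E]] := HV eta; have [l H] := good_alg Ht'.
  by exists l => L y Hy; rewrite -(req_tact E); apply: H.
- by exists 0%N => L y Hy; rewrite addn0 /=; apply: inspanZ.
- exists (maxn l1 l2) => L y Hy /=; apply: inspanD.
    exact: (good_le (leq_maxl _ _) H1).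
  exact: (good_le (leq_maxr _ _) H2).
- exists (l2 + l1)%N => L y Hy /=; rewrite addnA; apply: H1; exact: H2.
Qed.


Lemma inS_ms u : u \in ms -> inS 0 u.
Proof.
move=> um; apply: inspan_mem.
have -> : u = word_act aA aV [::] u by [].
by apply: layer_in => //=; left.
Qed.

Hypothesis Hms : gen_module aA aV ms.

Lemma inS_any y : exists d, inS d y.
Proof.
have [ps [Hps ->]] := Hms y.
elim: ps Hps => [|p ps IH] /=.
  by move=> _; exists 0%N; rewrite big_nil; apply: inspan0.
move=> /andP [p2 Hps]; have [d1 H1] := IH Hps.
have [l Hl] := good_all p.1.
have Hp := Hl 0%N _ (inS_ms p2); rewrite add0n in Hp.
exists (maxn l d1); rewrite big_cons; apply: inspanD.
  exact: (inS_le (leq_maxl _ _) Hp).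
exact: (inS_le (leq_maxr _ _) H1).
Qed.

Definition goodXD l := forall i L y, inS L y ->
  inS (L + l) (X aA i y) /\ inS (L + l) (D aV i y).

Lemma good_XD : exists l, goodXD l.
Proof.
suff : forall s : seq 'I_n, exists l, forall i, i \in s ->
    good (tA 'X_i) l /\ good (tV (@ev K n i)) l.
  move=> /(_ (enum 'I_n)) [l H]; exists l => i L y Hy.
  by have [H1 H2] := H i (mem_enum _ i); split; [exact: H1|exact: H2].
elim=> [|i s [l H]]; first by exists 0%N.
have [l1 H1] := good_all (tA 'X_i); have [l2 H2] := good_all (tV (@ev K n i)).
exists (maxn l (maxn l1 l2)) => j; rewrite in_cons => /orP [/eqP ->|js].
  split.
    by apply: (good_le _ H1); rewrite leq_max leq_maxl orbT.
  by apply: (good_le _ H2); rewrite leq_max leq_maxr orbT.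
by have [G1 G2] := H j js; split; [apply: (good_le _ G1)|apply: (good_le _ G2)]; exact: leq_maxl.
Qed.

Lemma inS_mono l : goodXD l -> forall d (m : 'X_{1..n+n}) L x, mdeg m = d -> inS L x ->
  inS (L + l * d) (mono aA aV m x).
Proof.
move=> Hl; elim=> [|d IH] m L x dm Fx.
  move/eqP: dm; rewrite mdeg_eq0 => /eqP ->; by rewrite mono0 // muln0 addn0.
have nz : m != 0%MM by apply/negP => /eqP e; move: dm; rewrite e mdeg0.
have [j lt] := mnm_pos nz.
have mE : m = (m - U_(j) + U_(j))%MM by rewrite submK // lep1mP -lt0n.
have dm' : mdeg (m - U_(j))%MM = d.
  by move: dm; rewrite {1}mE mdegD mdeg1 addn1 => [[]].
case: (splitP j) => i ji.
  have ej : j = lshift n i by apply: val_inj.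
  rewrite mE ej (mono_Ul HAV) -ej.
  have -> : (L + l * d.+1 = (L + l * d) + l)%N by rewrite mulnS; lia.
  by apply: (proj1 (Hl i _ _ _)); exact: IH.
have ej : j = rshift n i by apply: val_inj.
rewrite mE ej (mono_Ur HAV) -ej.
have -> : (L + l * d.+1 = (L + l) + l * d)%N by rewrite mulnS; lia.
apply: IH => //.
exact: (proj2 (Hl i _ _ Fx)).
Qed.

Lemma inF_inS v l d k u : goodXD l -> inS d v -> inF aA aV v k u -> inS (d + l * k) u.
Proof.
move=> Hl Hv [Q [HQ ->]]; rewrite (opwE _ _ _ HQ); apply: inspan_sum => m.
apply: inspanZ; apply: (@inS_le (d + l * mdeg (bmnm m))).
  by rewrite leq_add2l leq_mul2l -ltnS bmdeg orbT.
exact: inS_mono.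
Qed.

Hypothesis charK0 : [pchar K] =i pred0.
Hypothesis Hnz : exists v : M, v != 0.

Lemma growth : exists d c : nat, (0 < c)%N /\ forall m b, (d + c * b <= m)%N ->
  (b.+1 ^ n <= Defs.dim_span (layer aA aV cs ms m))%N.
Proof.
have [v vnz] := Hnz; have [d Hd] := inS_any v; have [l Hl] := good_XD.
exists d, (l * ((n + n) + (n + n))).+1; split => // m b le.
apply: (count_main HAV charK0 vnz) => u Fu.
apply: (inS_le _ (inF_inS Hl Hd Fu)).
apply: leq_trans le; rewrite leq_add2l -mulnDl mulnA mulSn leq_addl //.
Qed.

End Gen.

Section RealPart.
Local Open Scope R_scope.

Lemma limsup_ge (f : nat -> R) (L : R) :
  (forall eps : R, 0 < eps -> exists N : nat, forall m : nat, Peano.le N m -> L - eps <= f m) ->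
  Rbar_le (Rbar.Finite L) (LimSup_seq f).
Proof.
intros H.
assert (H1 : forall eps, 0 < eps -> Rbar_le (Rbar.Finite (L - eps)) (LimSup_seq f)).
{ intros eps He. rewrite <- (LimSup_seq_const (L - eps)). apply LimSup_le.
  destruct (H eps He) as [N HN]. exists N. intros m Hm. apply HN; auto. }
destruct (LimSup_seq f) as [l| |] eqn:E; simpl.
- apply Rnot_lt_le; intro Hl.
  assert (H2 : L - (L - l) / 2 <= l) by (apply (H1 ((L - l) / 2)); lra). lra.
- trivial.
- specialize (H1 1 Rlt_0_1). simpl in H1. exact H1.
Qed.

Lemma ratio_bound (u : nat -> nat) (nn : nat) (C : R) (m0 : nat) :
  0 < C -> (forall m, Peano.le m0 m -> (INR m / C) ^ nn <= INR (u m)) ->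
  Rbar_le (Rbar.Finite (INR nn)) (LimSup_seq (fun m => ln (INR (u m)) / ln (INR m))).
Proof.
intros HC Hu. apply limsup_ge. intros eps He.
set (T := INR nn * Rabs (ln C) / eps).
assert (HT : 0 <= exp T) by (left; apply exp_pos).
destruct (nfloor_ex (exp T) HT) as [N0 [_ HN0]].
exists (Nat.max (Nat.max m0 2) (S N0)). intros m Hm.
assert (Hm0 : Peano.le m0 m) by lia.
assert (Hm2 : 2 <= INR m) by (change 2 with (INR 2); apply le_INR; lia).
assert (HmN : exp T < INR m).
{ apply Rlt_le_trans with (INR (S N0)). rewrite S_INR. lra. apply le_INR. lia. }
set (lm := ln (INR m)).
assert (Hlm : 0 < lm).
{ unfold lm. rewrite <- ln_1. apply ln_increasing; lra. }
assert (HlmT : T <= lm).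
{ unfold lm. rewrite <- (ln_exp T). left. apply ln_increasing. apply exp_pos. exact HmN. }
assert (Hpos : 0 < INR m / C) by (apply Rdiv_lt_0_compat; lra).
assert (Hlu : INR nn * (lm - ln C) <= ln (INR (u m))).
{ unfold lm. rewrite <- ln_div by lra. rewrite <- ln_pow by exact Hpos.
  apply ln_le. apply pow_lt; exact Hpos. apply Hu; exact Hm0. }
assert (Hn0 : 0 <= INR nn) by apply pos_INR.
assert (HB : INR nn * ln C <= eps * lm).
{ apply Rle_trans with (INR nn * Rabs (ln C)).
  apply Rmult_le_compat_l; [exact Hn0 | apply Rle_abs].
  apply Rle_trans with (eps * T).
  right. unfold T. field. lra.
  apply Rmult_le_compat_l; lra. }
apply Rle_div_r; [exact Hlm|].
assert (E : (INR nn - eps) * lm = INR nn * lm - eps * lm) by ring.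
assert (E2 : INR nn * (lm - ln C) = INR nn * lm - INR nn * ln C) by ring.
lra.
Qed.

End RealPart.
End Helpers.

Lemma INR_expn a k : INR (a ^ k)%N = pow (INR a) k.
Proof.
elim: k => [|k IH]; first by rewrite expn0.
by rewrite expnS mulnE mult_INR IH.
Qed.

Local Open Scope ring_scope.

Theorem lemma2p3 (K : closedFieldType) (n : nat) (charK0 : [pchar K] =i pred0)
  (M : lmodType K) (aA : Apoly K n -> M -> M) (aV : Vder K n -> M -> M)
  (HAV : is_AVmodule aA aV)
  (Hnz : exists v : M, v != 0)
  (Hfg : exists ms : seq M, gen_module aA aV ms) :
  forall (cs : seq (sterm K n)) (ms : seq M),
    gen_subspace cs -> gen_module aA aV ms ->
    Rbar_le (Coquelicot.Rbar.Finite (INR n)) (GKdim aA aV cs ms).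
Proof.
move=> cs ms Hcs Hms.
have [d [c [c0 Hg]]] := Helpers.growth HAV Hcs Hms charK0 Hnz.
rewrite /GKdim.
apply: (@Helpers.ratio_bound (fun m => Defs.dim_span (layer aA aV cs ms m)) n
          (INR (2 * c)) (d + d)%N).
  by apply: lt_0_INR; apply/ltP; rewrite muln_gt0.
move=> m /leP Hm.
pose b := ((m - d) %/ c)%N.
have H1 : (b * c <= m - d)%N by apply: leq_trunc_div.
have H2 : (m - d < b.+1 * c)%N by apply: ltn_ceil.
have Hb : (d + c * b <= m)%N by rewrite mulnC; lia.
have Hm2 : (m <= (2 * c) * b.+1)%N by rewrite mulnAC; lia.
have := Hg m b Hb => /leP /le_INR; rewrite INR_expn => Hle.
apply: Rle_trans Hle; apply: pow_incr; split.
  apply: Rmult_le_pos; first exact: pos_INR.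
  by apply: Rlt_le; apply: Rinv_0_lt_compat; apply: lt_0_INR; apply/ltP; rewrite muln_gt0.
apply Rle_div_l; first by apply: lt_0_INR; apply/ltP; rewrite muln_gt0.
by rewrite -mult_INR; apply: le_INR; apply/leP; rewrite multE mulnC.
Qed.
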